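(* In a large society, the welfare maximizing equilibrium is not collaborative; that is, there is no welfare maximizing equilibrium with $C(\mathbf{g}^W)=\{i,j\}$ and $g^W_{ij}=g^W_{ji}=1$.
   Context: Model: $N=\{1,\dots,n\}$, $n\ge 3$, is the set of players. Each player $i$ chooses contributions $x_i\ge 0$, $y_i\ge 0$ to two public goods and links $g_{ij}\in\{0,1\}$ for $j\neq i$ (the directed network $\mathbf{g}$; $g_{ij}=1$ means $i$ sponsors a link to $j$). Let $N_i(\mathbf{g})=\{j: g_{ij}=1\}$, $\eta_i(\mathbf{g})=|N_i(\mathbf{g})|$, $\bar{x}_i(\mathbf{g})=\sum_{j\in N_i(\mathbf{g})}x_j$, $\bar{y}_i(\mathbf{g})=\sum_{j\in N_i(\mathbf{g})}y_j$. Player $i$'s payoff is $U_i(\mathbf{s})=t_i f(x_i+\bar{x}_i(\mathbf{g}))+(1-t_i)f(y_i+\bar{y}_i(\mathbf{g}))-c(x_i+y_i)-\eta_i(\mathbf{g})k$, where $t_i\in[0,1]$ is $i$'s type, $c>0$, $k>0$, and $f$ is twice continuously differentiable, strictly increasing and strictly concave with $\lim_{z\to0}f'(z)>c$ and $\lim_{z\to\infty}f'(z)<c$. Types are drawn from a continuous distribution on $[0,1]$, so they are distinct; players are indexed so that $t_i>t_j$ whenever $i>j$, and types $0$ and $1$ are realized. A Nash equilibrium is a profile $\mathbf{s}^*=(\mathbf{x}^*,\mathbf{y}^*,\mathbf{g}^* )$ from which no player can profitably deviate in her own contributions and links jointly. $C(\mathbf{g})=\{i: g_{ji}=1\text{ for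 some }j\}$ is the set of large contributors. Welfare is $\sum_{i\in N}U_i(\mathbf{s})$; the welfare maximizing equilibrium $\mathbf{s}^W$ (network $\mathbf{g}^W$) is a Nash equilibrium with welfare at least that of every Nash equilibrium. A large society is the limit $n\to\infty$ with types dense in $[0,1]$. *)

(* Defs.v *)
From Stdlib Require Import Reals Lra Lia Arith.
From Coquelicot Require Import Coquelicot.
Open Scope R_scope.

Fixpoint sumto (n : nat) (F : nat -> R) : R :=
  match n with
  | O => 0
  | S m => sumto m F + F m
  end.

(* Players are 0, ..., n-1.  A strategy profile is given by contributions
   x, y : nat -> R and links g : nat -> nat -> bool (g i j = true means that
   i sponsors a link to j); only entries with indices < n and j <> i matter. *)

Definition link (n : nat) (g : nat -> nat -> bool) (i j : nat) : bool :=
  (Nat.ltb j n && negb (Nat.eqb j i) && g i j)%bool.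

Definition nbsum (n : nat) (g : nat -> nat -> bool) (x : nat -> R) (i : nat) : R :=
  sumto n (fun j => if link n g i j then x j else 0).

Definition eta (n : nat) (g : nat -> nat -> bool) (i : nat) : R :=
  sumto n (fun j => if link n g i j then 1 else 0).

Definition payoff (n : nat) (f : R -> R) (c k : R) (t : nat -> R)
  (x y : nat -> R) (g : nat -> nat -> bool) (i : nat) : R :=
  t i * f (x i + nbsum n g x i) + (1 - t i) * f (y i + nbsum n g y i)
  - c * (x i + y i) - eta n g i * k.

Definition welfare (n : nat) (f : R -> R) (c k : R) (t : nat -> R)
  (x y : nat -> R) (g : nat -> nat -> bool) : R :=
  sumto n (fun i => payoff n f c k t x y g i).

Definition admissible (n : nat) (x y : nat -> R) : Prop :=
  forall i, (i < n)%nat -> 0 <= x i /\ 0 <= y i.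

Definition upd_R (x : nat -> R) (i : nat) (v : R) : nat -> R :=
  fun j => if Nat.eqb j i then v else x j.
Definition upd_g (g : nat -> nat -> bool) (i : nat) (gi : nat -> bool)
  : nat -> nat -> bool :=
  fun a b => if Nat.eqb a i then gi b else g a b.

Definition nash (n : nat) (f : R -> R) (c k : R) (t : nat -> R)
  (x y : nat -> R) (g : nat -> nat -> bool) : Prop :=
  admissible n x y /\
  forall i, (i < n)%nat ->
  forall (xi yi : R) (gi : nat -> bool), 0 <= xi -> 0 <= yi ->
    payoff n f c k t (upd_R x i xi) (upd_R y i yi) (upd_g g i gi) i
      <= payoff n f c k t x y g i.

Definition welfare_max_eq (n : nat) (f : R -> R) (c k : R) (t : nat -> R)
  (x y : nat -> R) (g : nat -> nat -> bool) : Prop :=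
  nash n f c k t x y g /\
  forall x' y' g', nash n f c k t x' y' g' ->
    welfare n f c k t x' y' g' <= welfare n f c k t x y g.

Definition large_contributor (n : nat) (g : nat -> nat -> bool) (m : nat) : Prop :=
  (m < n)%nat /\ exists j, (j < n)%nat /\ link n g j m = true.

Definition collaborative (n : nat) (g : nat -> nat -> bool) : Prop :=
  exists i j, (i < n)%nat /\ (j < n)%nat /\ i <> j /\
    link n g i j = true /\ link n g j i = true /\
    forall m, (m < n)%nat -> (large_contributor n g m <-> (m = i \/ m = j)).

Definition f_assumptions (f : R -> R) (c : R) : Prop :=
  (forall z, 0 < z ->
     ex_derive f z /\ ex_derive (Derive f) z /\
     continuous (Derive (Derive f)) z) /\
  filterlim f (at_right 0) (locally (f 0)) /\
  (forall a b, 0 <= a -> a < b -> f a < f b) /\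
  (forall a b l, 0 <= a -> 0 <= b -> a <> b -> 0 < l < 1 ->
     l * f a + (1 - l) * f b < f (l * a + (1 - l) * b)) /\
  (exists L : Rbar, filterlim (Derive f) (at_right 0) (Rbar_locally L)
                    /\ Rbar_lt (Finite c) L) /\
  (exists L : Rbar, filterlim (Derive f) (Rbar_locally p_infty) (Rbar_locally L)
                    /\ Rbar_lt L (Finite c)).

Definition type_profile (n : nat) (t : nat -> R) : Prop :=
  (forall i j, (j < i)%nat -> (i < n)%nat -> t j < t i) /\
  t 0%nat = 0 /\ t (n - 1)%nat = 1.

Definition delta_dense (n : nat) (t : nat -> R) (delta : R) : Prop :=
  forall z, 0 <= z <= 1 -> exists i, (i < n)%nat /\ Rabs (t i - z) < delta.

(* Main.v *)
Require Import Defs.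
From Stdlib Require Import Reals Lra Lia Psatz ZArith.
From Coquelicot Require Import Coquelicot.
Open Scope R_scope.

Definition cstrict (f : R -> R) := forall a b l, 0 <= a -> 0 <= b -> a <> b -> 0 < l < 1 ->
     l * f a + (1 - l) * f b < f (l * a + (1 - l) * b).

Lemma three_chord f u v w : cstrict f -> 0 <= u -> u < v -> v < w ->
  (f w - f v) * (v - u) <= (f v - f u) * (w - v).
Proof.
  intros Hc Hu Huv Hvw.
  set (l := (w - v) / (w - u)).
  assert (Hl : 0 < l < 1).
  { unfold l; split. apply Rdiv_lt_0_compat; lra.
    apply (Rmult_lt_reg_r (w - u)); [lra|]. unfold Rdiv; rewrite Rmult_assoc, Rinv_l; lra. }
  assert (Hv : l * u + (1 - l) * w = v).
  { unfold l; field_simplify; [|lra]. field_simplify_eq; [ring|lra]. }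
  pose proof (Hc u w l Hu ltac:(lra) ltac:(lra) Hl) as H. rewrite Hv in H.
  assert (Hl' : l * (w - u) = w - v) by (unfold l; field; lra).
  assert (H2 : (l * f u + (1 - l) * f w) * (w - u) <= f v * (w - u)).
  { apply Rmult_le_compat_r; lra. }
  nra.
Qed.

Lemma deriv_eps f z d : derivable_pt_lim f z d -> forall eps, 0 < eps ->
  exists del, 0 < del /\ forall e, 0 < e < del ->
   Rabs (f (z + e) - f z - d * e) <= eps * e /\ Rabs (f (z - e) - f z + d * e) <= eps * e.
Proof.
  intros Hd eps He. destruct (Hd eps He) as [del Hdel].
  exists del. split. apply cond_pos. intros e [He1 He2]. split.
  - assert (H := Hdel e ltac:(lra) ltac:(rewrite Rabs_pos_eq; lra)).
    replace (f (z + e) - f z - d * e) with (((f (z + e) - f z) / e - d) * e) by (field; lra).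
    rewrite Rabs_mult, (Rabs_pos_eq e) by lra. apply Rmult_le_compat_r; lra.
  - assert (H := Hdel (- e) ltac:(lra) ltac:(rewrite Rabs_Ropp, Rabs_pos_eq; lra)).
    replace (z - e) with (z + - e) by ring.
    replace (f (z + - e) - f z + d * e) with (((f (z + - e) - f z) / (- e) - d) * (- e)) by (field; lra).
    rewrite Rabs_mult, Rabs_Ropp, (Rabs_pos_eq e) by lra. apply Rmult_le_compat_r; lra.
Qed.

Lemma right_upper f z d th c eta : derivable_pt_lim f z d -> 0 <= th -> 0 < eta ->
  (forall e, 0 < e < eta -> th * (f (z + e) - f z) <= c * e) -> th * d <= c.
Proof.
  intros Hd Ht Heta H. destruct (Rle_dec (th * d) c) as [|Hn]; [assumption|]. exfalso.
  set (eps := (th * d - c) / (2 * (th + 1))).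
  assert (Heps : 0 < eps) by (unfold eps; apply Rdiv_lt_0_compat; lra).
  destruct (deriv_eps f z d Hd eps Heps) as [del [Hdel Hb]].
  set (e := Rmin del eta / 2).
  assert (He : 0 < e < del /\ e < eta).
  { unfold e; split; [split|]; try (apply Rmin_case_strong; lra). }
  destruct (Hb e ltac:(lra)) as [B1 _]. apply Rabs_le_between in B1.
  specialize (H e ltac:(lra)).
  assert (Heq : eps * (2 * (th + 1)) = th * d - c) by (unfold eps; field; lra).
  assert (th * (d * e - eps * e) <= th * (f (z + e) - f z)) by (apply Rmult_le_compat_l; lra).
  nra.
Qed.

Lemma left_lower f z d th c eta : derivable_pt_lim f z d -> 0 <= th -> 0 < eta ->
  (forall e, 0 < e < eta -> c * e <= th * (f z - f (z - e))) -> c <= th * d.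
Proof.
  intros Hd Ht Heta H. destruct (Rle_dec c (th * d)) as [|Hn]; [assumption|]. exfalso.
  set (eps := (c - th * d) / (2 * (th + 1))).
  assert (Heps : 0 < eps) by (unfold eps; apply Rdiv_lt_0_compat; lra).
  destruct (deriv_eps f z d Hd eps Heps) as [del [Hdel Hb]].
  set (e := Rmin del eta / 2).
  assert (He : 0 < e < del /\ e < eta).
  { unfold e; split; [split|]; try (apply Rmin_case_strong; lra). }
  destruct (Hb e ltac:(lra)) as [_ B1]. apply Rabs_le_between in B1.
  specialize (H e ltac:(lra)).
  assert (Heq : eps * (2 * (th + 1)) = c - th * d) by (unfold eps; field; lra).
  assert (th * (f z - f (z - e)) <= th * (d * e + eps * e)) by (apply Rmult_le_compat_l; lra).
  nra.
Qed.

Lemma right_lower f z d B eta : derivable_pt_lim f z d -> 0 < eta ->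
  (forall e, 0 < e < eta -> B * e <= f (z + e) - f z) -> B <= d.
Proof.
  intros Hd Heta H. destruct (Rle_dec B d) as [|Hn]; [assumption|]. exfalso.
  set (eps := (B - d) / 2).
  assert (Heps : 0 < eps) by (unfold eps; lra).
  destruct (deriv_eps f z d Hd eps Heps) as [del [Hdel Hb]].
  set (e := Rmin del eta / 2).
  assert (He : 0 < e < del /\ e < eta).
  { unfold e; split; [split|]; try (apply Rmin_case_strong; lra). }
  destruct (Hb e ltac:(lra)) as [B1 _]. apply Rabs_le_between in B1.
  specialize (H e ltac:(lra)). unfold eps in *. nra.
Qed.

Lemma left_upper f z d B eta : derivable_pt_lim f z d -> 0 < eta ->
  (forall e, 0 < e < eta -> f z - f (z - e) <= B * e) -> d <= B.
Proof.
  intros Hd Heta H. destruct (Rle_dec d B) as [|Hn]; [assumption|]. exfalso.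
  set (eps := (d - B) / 2).
  assert (Heps : 0 < eps) by (unfold eps; lra).
  destruct (deriv_eps f z d Hd eps Heps) as [del [Hdel Hb]].
  set (e := Rmin del eta / 2).
  assert (He : 0 < e < del /\ e < eta).
  { unfold e; split; [split|]; try (apply Rmin_case_strong; lra). }
  destruct (Hb e ltac:(lra)) as [_ B1]. apply Rabs_le_between in B1.
  specialize (H e ltac:(lra)). unfold eps in *. nra.
Qed.

Lemma tangent f z d w : cstrict f -> derivable_pt_lim f z d -> 0 < z -> 0 <= w ->
  f w <= f z + d * (w - z).
Proof.
  intros Hc Hd Hz Hw.
  destruct (Rtotal_order w z) as [Hlt | [Heq | Hgt]].
  -
    assert (Hs : d <= (f z - f w) / (z - w)).
    { apply (left_upper f z d _ (z - w) Hd); [lra|].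
      intros e He.
      pose proof (three_chord f w (z - e) z Hc Hw ltac:(lra) ltac:(lra)) as T.
      apply (Rmult_le_reg_r (z - w)); [lra|].
      replace ((f z - f w) / (z - w) * e * (z - w)) with ((f z - f w) * e) by (field; lra).
      nra. }
    apply (Rmult_le_compat_r (z - w)) in Hs; [|lra].
    unfold Rdiv in Hs; rewrite Rmult_assoc, Rinv_l in Hs by lra. nra.
  - subst; lra.
  - assert (Hs : (f w - f z) / (w - z) <= d).
    { apply (right_lower f z d _ (w - z) Hd); [lra|].
      intros e He.
      pose proof (three_chord f z (z + e) w Hc ltac:(lra) ltac:(lra) ltac:(lra)) as T.
      apply (Rmult_le_reg_r (w - z)); [lra|].
      replace ((f w - f z) / (w - z) * e * (w - z)) with ((f w - f z) * e) by (field; lra).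
      nra. }
    apply (Rmult_le_compat_r (w - z)) in Hs; [|lra].
    unfold Rdiv in Hs; rewrite Rmult_assoc, Rinv_l in Hs by lra. nra.
Qed.
Lemma loc_gt (l c : R) : c < l -> locally l (fun y => c < y).
Proof.
  intros H. assert (Hp : 0 < l - c) by lra. exists (mkposreal _ Hp).
  intros y Hy. change (Rabs (y - l) < l - c) in Hy. apply Rabs_lt_between in Hy. lra.
Qed.
Lemma loc_lt (l c : R) : l < c -> locally l (fun y => y < c).
Proof.
  intros H. assert (Hp : 0 < c - l) by lra. exists (mkposreal _ Hp).
  intros y Hy. change (Rabs (y - l) < c - l) in Hy. apply Rabs_lt_between in Hy. lra.
Qed.
Lemma near0 (g : R -> R) c L : filterlim g (at_right 0) (Rbar_locally L) -> Rbar_lt (Finite c) L ->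
  exists z, 0 < z /\ c < g z.
Proof.
  intros Hl Hlt.
  assert (HP : Rbar_locally L (fun y => c < y)).
  { destruct L as [l| |]; simpl in *. apply loc_gt; auto. exists c; auto. contradiction. }
  specialize (Hl _ HP). destruct Hl as [eps Heps].
  exists (eps / 2). split. destruct eps; simpl; lra.
  apply Heps. change (Rabs (eps/2 - 0) < eps). rewrite Rminus_0_r, Rabs_pos_eq; destruct eps; simpl; lra.
  destruct eps; simpl; lra.
Qed.
Lemma nearinf (g : R -> R) c L : filterlim g (Rbar_locally p_infty) (Rbar_locally L) -> Rbar_lt L (Finite c) ->
  exists z, 0 < z /\ g z < c.
Proof.
  intros Hl Hlt.
  assert (HP : Rbar_locally L (fun y => y < c)).
  { destruct L as [l| |]; simpl in *. apply loc_lt; auto. contradiction. exists c; auto. }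
  specialize (Hl _ HP). destruct Hl as [M HM].
  exists (Rmax M 0 + 1). split. pose proof (Rmax_r M 0); lra.
  apply HM. pose proof (Rmax_l M 0); lra.
Qed.

Lemma fa_concave f c : f_assumptions f c -> cstrict f.
Proof. intros H; unfold cstrict; apply H. Qed.

Lemma fa_deriv f c z : f_assumptions f c -> 0 < z -> derivable_pt_lim f z (Derive f z).
Proof.
  intros H Hz. apply is_derive_Reals. apply Derive_correct. apply (proj1 (proj1 H z Hz)).
Qed.

Lemma fa_incr f c a b : f_assumptions f c -> 0 <= a -> a <= b -> f a <= f b.
Proof.
  intros H Ha Hab. destruct (Req_dec a b). subst; lra.
  left. apply H; lra.
Qed.

Lemma fa_cont f c z : f_assumptions f c -> 0 < z -> continuity_pt (fun w => f w - c * w) z.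
Proof.
  intros H Hz. apply continuity_pt_minus.
  - apply continuity_pt_filterlim.
    pose proof (ex_derive_continuous (K:=R_AbsRing) (V:=R_NormedModule) f z (proj1 (proj1 H z Hz))) as Hc.
    exact Hc.
  - apply continuity_pt_mult. apply continuity_pt_const; intros ? ?; auto. apply derivable_continuous_pt, derivable_pt_id.
Qed.

Lemma exists_max f c : f_assumptions f c -> 0 < c ->
  exists ms, 0 <= ms /\ forall w, 0 <= w -> f w - c * w <= f ms - c * ms.
Proof.
  intros H Hc. pose proof (fa_concave f c H) as Hcv. pose proof H as HH.
  destruct H as (Hd & Hf0 & Hinc & Hcc & [L0 [HL0 HL0c]] & [L1 [HL1 HL1c]]).
  destruct (near0 _ _ _ HL0 HL0c) as [z1 [Hz1 Hd1]].
  destruct (nearinf _ _ _ HL1 HL1c) as [z0 [Hz0 Hd0]].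
  assert (G1 : forall w, 0 <= w <= z1 -> f w - c * w <= f z1 - c * z1).
  { intros w Hw. pose proof (tangent f z1 (Derive f z1) w Hcv (fa_deriv f c z1 HH Hz1) Hz1 (proj1 Hw)). nra. }
  assert (G0 : forall w, z0 <= w -> f w - c * w <= f z0 - c * z0).
  { intros w Hw. pose proof (tangent f z0 (Derive f z0) w Hcv (fa_deriv f c z0 HH Hz0) Hz0 ltac:(lra)). nra. }
  destruct (Rle_dec z0 z1).
  - exists z0. split. lra. intros w Hw. destruct (Rle_dec z0 w). apply G0; lra.
    specialize (G1 w ltac:(lra)). specialize (G0 z1 r). lra.
  - destruct (continuity_ab_maj (fun w => f w - c * w) z1 z0 ltac:(lra)) as [M [HM1 HM2]].
    { intros x Hx. apply fa_cont; auto; lra. }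
    exists M. split. lra. intros w Hw.
    destruct (Rle_dec w z1). specialize (G1 w ltac:(lra)). specialize (HM1 z1 ltac:(lra)). simpl in HM1; lra.
    destruct (Rle_dec z0 w). specialize (G0 w r). specialize (HM1 z0 ltac:(lra)). simpl in HM1; lra.
    apply (HM1 w); lra.
Qed.

Lemma gap f c ms a : f_assumptions f c -> 0 < c -> 0 < ms ->
  (forall w, 0 <= w -> f w - c * w <= f ms - c * ms) -> 0 < a < 1 ->
  exists h, 0 < h /\ 2 * h <= ms /\
    forall th X, 0 < th <= a -> 0 < X ->
      (forall w, 0 <= w < X -> c * (X - w) <= th * (f X - f w)) -> X <= ms - h.
Proof.
  intros H Hc Hms Hmax Ha.
  pose proof (fa_deriv f c ms H Hms) as Hd. set (d := Derive f ms) in *.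
  assert (Hdc : 1 * d <= c).
  { apply (right_upper f ms d 1 c 1 Hd); [lra|lra|]. intros e He.
    specialize (Hmax (ms + e) ltac:(lra)). lra. }
  set (eps := c * (1 - a) / 6).
  assert (Heps : 0 < eps) by (unfold eps; apply Rdiv_lt_0_compat; nra).
  destruct (deriv_eps f ms d Hd eps Heps) as [del [Hdel Hb]].
  set (h := Rmin (del / 3) (ms / 2)).
  assert (Hh : 0 < h /\ h <= del / 3 /\ h <= ms / 2).
  { unfold h; split; [apply Rmin_case_strong; lra|]. split; [apply Rmin_l|apply Rmin_r]. }
  exists h. split. lra. split. lra.
  intros th X Hth HX Hopt.
  destruct (Rle_dec X (ms - h)) as [|Hn]; [assumption|]. exfalso.
  destruct (Hb h ltac:(lra)) as [_ B1]. destruct (Hb (2 * h) ltac:(lra)) as [_ B2].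
  apply Rabs_le_between in B1. apply Rabs_le_between in B2.
  set (v := ms - h) in *. set (u := ms - 2 * h).
  assert (Hfv : f v - f u <= (d + 3 * eps) * h) by (unfold u, v in *; nra).
  assert (Hmon : f u <= f v) by (apply (fa_incr f c _ _ H); unfold u, v; lra).
  assert (HT := three_chord f u v X (fa_concave f c H) ltac:(unfold u; lra) ltac:(unfold u, v; lra) ltac:(lra)).
  assert (Hvx : 0 <= v < X) by (unfold v in *; lra).
  assert (HO := Hopt v Hvx).
  replace (v - u) with h in HT by (unfold u, v; ring).
  assert (K1 : c * (X - v) * h <= th * (f v - f u) * (X - v)) by nra.
  assert (K2 : c * h <= th * (f v - f u)).
  { apply (Rmult_le_reg_r (X - v)). lra. nra. }
  assert (K3 : th * (f v - f u) <= a * (f v - f u)) by nra.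
  assert (K4 : a * (f v - f u) <= a * ((d + 3 * eps) * h)) by nra.
  assert (K5 : a * (d + 3 * eps) < c).
  { unfold eps. assert (a * d <= a * c) by nra.
    assert (E : c - a * (c + 3 * (c * (1 - a) / 6)) = c * ((1 - a) * (2 - a)) / 2) by field.
    assert (P1 : 0 < (1 - a) * (2 - a)) by nra.
    assert (P2 : 0 < c * ((1 - a) * (2 - a))) by nra.
    nra. }
  assert (K6 : a * ((d + 3 * eps) * h) < c * h) by nra.
  lra.
Qed.

Lemma deriv_types f c z th1 th2 eta : f_assumptions f c -> 0 < c -> 0 < z -> 0 <= th1 -> 0 <= th2 -> 0 < eta ->
  (forall e, 0 < e < eta -> c * e <= th1 * (f z - f (z - e))) ->
  (forall e, 0 < e < 1 -> th2 * (f (z + e) - f z) <= c * e) -> th2 <= th1.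
Proof.
  intros H Hc Hz H1 H2 Heta HL HR.
  pose proof (fa_deriv f c z H Hz) as Hd.
  pose proof (left_lower f z _ th1 c eta Hd H1 Heta HL).
  pose proof (right_upper f z _ th2 c 1 Hd H2 ltac:(lra) HR).
  destruct (Rle_dec th2 th1); [auto|]. exfalso.
  assert (0 < Derive f z) by nra. nra.
Qed.

Lemma sumto_ext n F G : (forall q, (q < n)%nat -> F q = G q) -> sumto n F = sumto n G.
Proof. induction n; simpl; intros H; auto. rewrite IHn by (intros; apply H; lia). rewrite H by lia. auto. Qed.

Lemma sumto_le n F G : (forall q, (q < n)%nat -> F q <= G q) -> sumto n F <= sumto n G.
Proof. induction n; simpl; intros H. lra. pose proof (IHn ltac:(intros; apply H; lia)). pose proof (H n ltac:(lia)). lra. Qed.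

Lemma sumto_plus n F G : sumto n (fun q => F q + G q) = sumto n F + sumto n G.
Proof. induction n; simpl; [lra|]. rewrite IHn; ring. Qed.

Lemma sumto_zero n F : (forall q, (q < n)%nat -> F q = 0) -> sumto n F = 0.
Proof. induction n; simpl; intros H; auto. rewrite IHn by (intros; apply H; lia). rewrite H by lia. ring. Qed.

Lemma sumto_one n F i : (i < n)%nat -> (forall q, (q < n)%nat -> q <> i -> F q = 0) -> sumto n F = F i.
Proof.
  induction n; simpl; intros Hi H. lia.
  destruct (Nat.eq_dec i n). subst. rewrite sumto_zero by (intros; apply H; lia). ring.
  rewrite IHn by (try lia; intros; apply H; lia). rewrite (H n) by lia. ring.
Qed.

Lemma sumto_two n F i j : (i < n)%nat -> (j < n)%nat -> i <> j ->
  (forall q, (q < n)%nat -> q <> i -> q <> j -> F q = 0) -> sumto n F = F i + F j.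
Proof.
  induction n; simpl; intros Hi Hj Hij H. lia.
  destruct (Nat.eq_dec i n). subst. rewrite (sumto_one n F j) by (try lia; intros; apply H; lia). ring.
  destruct (Nat.eq_dec j n). subst. rewrite (sumto_one n F i) by (try lia; intros; apply H; lia). ring.
  rewrite IHn by (try lia; intros; apply H; lia). rewrite (H n) by lia. ring.
Qed.

Lemma sumto_le_two n F i j : (i < n)%nat -> (j < n)%nat -> i <> j ->
  (forall q, (q < n)%nat -> q <> i -> q <> j -> F q <= 0) -> sumto n F <= F i + F j.
Proof.
  intros Hi Hj Hij H.
  set (G q := if Nat.eq_dec q i then F q else if Nat.eq_dec q j then F q else 0).
  apply Rle_trans with (sumto n G).
  - apply sumto_le. intros q Hq. unfold G. destruct (Nat.eq_dec q i); [lra|]. destruct (Nat.eq_dec q j); [lra|]. apply H; auto.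
  - rewrite (sumto_two n G i j) by (auto; intros q Hq H1 H2; unfold G; destruct (Nat.eq_dec q i); try lia; destruct (Nat.eq_dec q j); lia||lra).
    unfold G. destruct (Nat.eq_dec i i); [|lia]. destruct (Nat.eq_dec j i); [lia|]. destruct (Nat.eq_dec j j); lia||lra.
Qed.

Definition ismax (f : R -> R) c ms := 0 <= ms /\ forall w, 0 <= w -> f w - c * w <= f ms - c * ms.

Lemma SC f c ms th z L : f_assumptions f c -> ismax f c ms -> 0 <= th < 1 -> 0 <= L -> L <= z -> L <= ms ->
  (forall v, L <= v -> th * f v - c * v <= th * f z - c * z) -> z <= ms.
Proof.
  intros H [Hms Hmax] Hth HL Hz HLm Hopt.
  destruct (Rle_dec z ms) as [|Hn]; [auto|]. exfalso.
  assert (Hf : f ms < f z) by (apply H; lra).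
  specialize (Hopt ms HLm). specialize (Hmax z ltac:(lra)). nra.
Qed.

Lemma G5 f c k ms th0 th' A : f_assumptions f c -> ismax f c ms ->
  (forall w, 0 <= w -> th0 * f w - c * w <= th0 * f A - k) -> 0 <= th0 <= th' -> th' <= 1 ->
  0 <= A <= ms -> k <= c * ms -> forall w, 0 <= w -> th' * f w - c * w <= th' * f ms - k.
Proof.
  intros H [Hms Hmax] HD Hth Hth1 HA Hk w Hw.
  destruct (Rle_dec w ms).
  - specialize (HD w Hw).
    assert (f w <= f ms) by (apply (fa_incr f c _ _ H); auto).
    assert (f A <= f ms) by (apply (fa_incr f c _ _ H); lra).
    assert (P1 : 0 <= th' * (f ms - f w)) by (apply Rmult_le_pos; lra).
    destruct (Rle_dec (k - c * w) 0). lra.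
    assert (P2 : k - c * w <= th0 * (f A - f w)) by lra.
    assert (P3 : th0 * (f A - f w) <= th' * (f A - f w)).
    { destruct (Rle_dec (f A) (f w)). assert (th0 * (f A - f w) <= 0) by nra. lra.
      apply Rmult_le_compat_r; lra. }
    assert (P4 : th' * (f A - f w) <= th' * (f ms - f w)) by (apply Rmult_le_compat_l; lra).
    lra.
  - assert (f ms <= f w) by (apply (fa_incr f c _ _ H); lra).
    specialize (Hmax w Hw). nra.
Qed.

Definition rb (f : R -> R) c k ms (th u : R) : bool :=
  if Rle_dec (th * f u - c * u) (th * f ms - k) then true else false.
Definition ib (b : bool) : R := if b then 1 else 0.


Lemma gen_nonhub f c k ms th u Lb A : f_assumptions f c -> 0 < c -> 0 < k -> ismax f c ms ->
  0 <= th < 1 -> 0 <= u -> 0 <= A <= ms ->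
  (forall v, 0 <= v -> th * f (v + ib Lb * A) - c * v <= th * f (u + ib Lb * A) - c * u) ->
  (Lb = true -> forall v, 0 <= v -> th * f v - c * v <= th * f (u + A) - c * u - k) ->
  let r := rb f c k ms th u in
  let us := if r then 0 else u in
  let cu := if r then th * f ms - k else th * f u - c * u in
  (forall v, 0 <= v -> th * f v - c * v <= cu /\ th * f (v + ms) - c * v - k <= cu) /\
  (th * f (u + ib Lb * A) - c * u - ib Lb * k <= cu) /\
  (c * us <= k) /\ (Lb = true -> r = true) /\ 0 <= us /\
  (forall h, (1 - th) * (f ms - f 0) <= c * h / 2 -> A <= ms - h -> k <= c * A ->
     th * f (u + ib Lb * A) - c * u - ib Lb * k + c * h / 2 <= cu).
Proof.
  intros H Hc Hk [Hms Hmax] Hth Hu HA HO HD r us cu.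
  assert (Eus : us = if r then 0 else u) by reflexivity.
  assert (Ecu : cu = if r then th * f ms - k else th * f u - c * u) by reflexivity.
  clearbody us cu.
  assert (Hr : r = true -> th * f u - c * u <= th * f ms - k).
  { unfold r, rb. destruct (Rle_dec _ _); auto; discriminate. }
  assert (Hnr : r = false -> th * f ms - k < th * f u - c * u).
  { unfold r, rb. destruct (Rle_dec _ _); [discriminate|]. intros; lra. }
  assert (Hrr : r = true \/ r = false) by (destruct r; auto).
  clearbody r.
  assert (Hinc : forall a b, 0 <= a -> a <= b -> f a <= f b) by (intros; apply (fa_incr f c _ _ H); auto).
  assert (Hcons : Lb = true -> u + A <= ms).
  { intros HL. apply (SC f c ms th (u + A) A H (conj Hms Hmax) Hth); try lra.
    intros v Hv. specialize (HO (v - A) ltac:(lra)). rewrite HL in HO. unfold ib in HO.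
    replace (v - A + 1 * A) with v in HO by ring. replace (u + 1 * A) with (u + A) in HO by ring. lra. }
  assert (Hglob : Lb = false -> forall v, 0 <= v -> th * f v - c * v <= th * f u - c * u).
  { intros HL v Hv. specialize (HO v Hv). rewrite HL in HO. unfold ib in HO.
    rewrite !Rmult_0_l, !Rplus_0_r in HO. auto. }
  assert (Hunl : Lb = false -> u <= ms).
  { intros HL. apply (SC f c ms th u 0 H (conj Hms Hmax) Hth); try lra. intros v Hv. apply Hglob; auto. }
  assert (HLr : Lb = true -> r = true).
  { intros HL. destruct Hrr as [|Hn]; auto. exfalso. pose proof (Hnr Hn).
    specialize (HD HL u Hu). pose proof (Hinc (u + A) ms ltac:(lra) (Hcons HL)).
    assert (th * f (u + A) <= th * f ms) by (apply Rmult_le_compat_l; lra). nra. }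
  assert (Hcu1 : th * f ms - k <= cu).
  { rewrite Ecu. destruct r eqn:E. lra. pose proof (Hnr eq_refl). lra. }
  assert (Hcu2 : forall v, 0 <= v -> th * f v - c * v <= cu).
  { intros v Hv. destruct Lb eqn:EL.
    - specialize (HD eq_refl v Hv). pose proof (Hinc (u + A) ms ltac:(nra) (Hcons eq_refl)).
      assert (th * f (u + A) <= th * f ms) by (apply Rmult_le_compat_l; nra). nra.
    - specialize (Hglob eq_refl v Hv). rewrite Ecu. destruct r eqn:E. pose proof (Hr eq_refl). nra. nra. }
  split; [|split; [|split; [|split; [|split]]]].
  - intros v Hv. split. apply Hcu2; auto.
    specialize (Hmax (v + ms) ltac:(nra)).
    assert (f ms <= f (v + ms)) by (apply Hinc; nra).
    assert (th * (f (v + ms) - f ms) <= f (v + ms) - f ms) by nra. nra.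
  - destruct Lb eqn:EL.
    + unfold ib. replace (u + 1 * A) with (u + A) by ring.
      pose proof (Hinc (u + A) ms ltac:(nra) (Hcons eq_refl)).
      assert (th * f (u + A) <= th * f ms) by (apply Rmult_le_compat_l; nra). nra.
    + unfold ib. rewrite !Rmult_0_l, Rplus_0_r, Rminus_0_r. apply Hcu2; auto.
  - rewrite Eus. destruct r eqn:E. nra.
    pose proof (Hnr eq_refl).
    assert (HL : Lb = false) by (destruct Lb; auto; pose proof (HLr eq_refl); congruence).
    pose proof (Hinc u ms Hu (Hunl HL)).
    assert (th * f u <= th * f ms) by (apply Rmult_le_compat_l; nra). nra.
  - auto.
  - rewrite Eus. destruct r; nra.
  - intros h Hh HAh HkA. assert (Hf0 : forall w, 0 <= w -> f 0 <= f w) by (intros; apply Hinc; nra).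
    destruct Lb eqn:EL.
    + unfold ib. replace (u + 1 * A) with (u + A) by ring. rewrite Ecu. rewrite (HLr eq_refl).
      specialize (Hmax (u + A) ltac:(nra)). pose proof (Hf0 (u + A) ltac:(nra)).
      pose proof (Hinc (u + A) ms ltac:(nra) (Hcons eq_refl)).
      assert ((1 - th) * (f ms - f (u + A)) <= (1 - th) * (f ms - f 0)) by (apply Rmult_le_compat_l; nra).
      nra.
    + unfold ib. rewrite !Rmult_0_l, Rplus_0_r, Rminus_0_r.
      assert (th * f ms - k - (th * f u - c * u) >= c * h / 2).
      { specialize (Hmax u Hu). pose proof (Hf0 u Hu). pose proof (Hinc u ms Hu (Hunl eq_refl)).
        assert ((1 - th) * (f ms - f u) <= (1 - th) * (f ms - f 0)) by (apply Rmult_le_compat_l; nra).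
        nra. }
      rewrite Ecu. destruct r; nra.
Qed.

Lemma gen_hub f c k ms u Lb A : f_assumptions f c -> 0 < c -> 0 < k -> ismax f c ms ->
  0 <= u -> 0 <= A <= ms ->
  (forall v, 0 <= v -> 1 * f (v + ib Lb * A) - c * v <= 1 * f (u + ib Lb * A) - c * u) ->
  1 * f (u + ib Lb * A) - c * u - ib Lb * k <= (1 * f ms - c * ms) + c * ms.
Proof.
  intros H Hc Hk [Hms Hmax] Hu HA HO.
  specialize (Hmax (u + ib Lb * A)). unfold ib in *. destruct Lb; nra.
Qed.

Definition lk (n : nat) (r : nat -> bool) (m q : nat) : bool :=
  (Nat.ltb q n && negb (Nat.eqb q m) && r q)%bool.
Definition SX n r m (x : nat -> R) := sumto n (fun q => if lk n r m q then x q else 0).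
Definition SE n r m := sumto n (fun q => if lk n r m q then 1 else 0).

Lemma payoff_cur n f c k t x y g m :
  payoff n f c k t x y g m =
  t m * f (x m + SX n (g m) m x) + (1 - t m) * f (y m + SX n (g m) m y) - c * (x m + y m) - SE n (g m) m * k.
Proof. reflexivity. Qed.

Lemma lk_upd n g m r q : link n (upd_g g m r) m q = lk n r m q.
Proof. unfold link, lk, upd_g. rewrite Nat.eqb_refl. reflexivity. Qed.

Lemma nbsum_upd n g m r (x : nat -> R) v :
  nbsum n (upd_g g m r) (upd_R x m v) m = SX n r m x.
Proof.
  unfold nbsum, SX. apply sumto_ext. intros q Hq. rewrite lk_upd.
  unfold lk, upd_R. destruct (Nat.eqb q m) eqn:E; simpl.
  - rewrite Bool.andb_false_r; simpl. reflexivity.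
  - reflexivity.
Qed.

Lemma eta_upd n g m r : eta n (upd_g g m r) m = SE n r m.
Proof. unfold eta, SE. apply sumto_ext. intros q Hq. rewrite lk_upd. reflexivity. Qed.

Lemma payoff_dev n f c k t x y g m v w r :
  payoff n f c k t (upd_R x m v) (upd_R y m w) (upd_g g m r) m =
  t m * f (v + SX n r m x) + (1 - t m) * f (w + SX n r m y) - c * (v + w) - SE n r m * k.
Proof.
  unfold payoff. rewrite !nbsum_upd, eta_upd. unfold upd_R. rewrite !Nat.eqb_refl. reflexivity.
Qed.

Lemma SX_two n r m (x : nat -> R) a b : (a < n)%nat -> (b < n)%nat -> a <> b ->
  (forall q, lk n r m q = true -> q = a \/ q = b) ->
  SX n r m x = (if lk n r m a then x a else 0) + (if lk n r m b then x b else 0).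
Proof.
  intros Ha Hb Hab H. unfold SX. apply (sumto_two n (fun q => if lk n r m q then x q else 0)); auto.
  intros q Hq Hqa Hqb. destruct (lk n r m q) eqn:E; auto. destruct (H q E); lia.
Qed.

Lemma SE_two n r m a b : (a < n)%nat -> (b < n)%nat -> a <> b ->
  (forall q, lk n r m q = true -> q = a \/ q = b) ->
  SE n r m = (if lk n r m a then 1 else 0) + (if lk n r m b then 1 else 0).
Proof.
  intros Ha Hb Hab H. unfold SE. apply (sumto_two n (fun q => if lk n r m q then 1 else 0)); auto.
  intros q Hq Hqa Hqb. destruct (lk n r m q) eqn:E; auto. destruct (H q E); lia.
Qed.

Lemma sumto_lin n a b d F G H :
  sumto n (fun q => a * F q + b * G q - d * H q) = a * sumto n F + b * sumto n G - d * sumto n H.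
Proof. induction n; simpl. ring. rewrite IHn. ring. Qed.

Lemma sumto_nonneg n F : (forall q, (q < n)%nat -> 0 <= F q) -> 0 <= sumto n F.
Proof. intros H. rewrite <- (sumto_zero n (fun _ => 0)) by auto. apply sumto_le. auto. Qed.

Lemma lk_lt n r m q : lk n r m q = true -> (q < n)%nat /\ q <> m /\ r q = true.
Proof.
  unfold lk. intros H. apply andb_prop in H as [H1 H3]. apply andb_prop in H1 as [H1 H2].
  apply Nat.ltb_lt in H1. apply Bool.negb_true_iff in H2. apply Nat.eqb_neq in H2. auto.
Qed.

(* ---------- one side of the alternative profile ---------- *)
Definition usF f c k ms (w : nat -> R) (u : nat -> R) hub m : R :=
  if Nat.eqb m hub then ms else if rb f c k ms (w m) (u m) then 0 else u m.
Definition lhF f c k ms (w : nat -> R) (u : nat -> R) hub m : bool :=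
  (negb (Nat.eqb m hub) && rb f c k ms (w m) (u m))%bool.
Definition curS f c k ms w u hub m : R :=
  w m * f (usF f c k ms w u hub m + ib (lhF f c k ms w u hub m) * ms)
  - c * usF f c k ms w u hub m - ib (lhF f c k ms w u hub m) * k.
Definition spart f c k (w u : nat -> R) A (L : nat -> bool) m : R :=
  w m * f (u m + ib (L m) * A) - c * u m - ib (L m) * k.

Lemma side_facts f c k ms n w u hub A L :
  f_assumptions f c -> 0 < c -> 0 < k -> ismax f c ms -> (hub < n)%nat ->
  (forall m, (m < n)%nat -> 0 <= w m <= 1) -> w hub = 1 ->
  (forall m, (m < n)%nat -> m <> hub -> w m < 1) ->
  (forall m, (m < n)%nat -> 0 <= u m) -> 0 <= A <= ms ->
  (forall m, (m < n)%nat -> forall v, 0 <= v ->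
     w m * f (v + ib (L m) * A) - c * v <= w m * f (u m + ib (L m) * A) - c * u m) ->
  (forall m, (m < n)%nat -> L m = true -> forall v, 0 <= v ->
     w m * f v - c * v <= w m * f (u m + A) - c * u m - k) ->
  (forall m, (m < n)%nat -> m <> hub -> c * usF f c k ms w u hub m <= k /\
      (rb f c k ms (w m) (u m) = true -> usF f c k ms w u hub m = 0)) /\
  (forall m, (m < n)%nat -> 0 <= usF f c k ms w u hub m) /\
  usF f c k ms w u hub hub = ms /\
  (forall m, (m < n)%nat -> lhF f c k ms w u hub m = (negb (Nat.eqb m hub) && rb f c k ms (w m) (u m))%bool) /\
  (forall m, (m < n)%nat -> forall v, 0 <= v -> forall P : bool, (m = hub -> P = false) ->
     w m * f (v + ib P * ms) - c * v - ib P * k <= curS f c k ms w u hub m) /\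
  (forall m, (m < n)%nat -> m <> hub -> spart f c k w u A L m <= curS f c k ms w u hub m) /\
  (spart f c k w u A L hub <= curS f c k ms w u hub hub + c * ms) /\
  (forall m, (m < n)%nat -> m <> hub -> L m = true -> rb f c k ms (w m) (u m) = true) /\
  (forall m hh, (m < n)%nat -> m <> hub -> (1 - w m) * (f ms - f 0) <= c * hh / 2 -> A <= ms - hh -> k <= c * A ->
     spart f c k w u A L m + c * hh / 2 <= curS f c k ms w u hub m).
Proof.
  intros H Hc Hk Hms Hhub Hw Hwh Hw1 Hu HA HO HD.
  assert (Gn : forall m, (m < n)%nat -> m <> hub -> _) by
   (intros m Hm Hmh; exact (gen_nonhub f c k ms (w m) (u m) (L m) A H Hc Hk Hms
       (conj (proj1 (Hw m Hm)) (Hw1 m Hm Hmh)) (Hu m Hm) HA (HO m Hm) (HD m Hm))).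
  assert (Ecur : forall m, (m < n)%nat -> m <> hub ->
     curS f c k ms w u hub m = if rb f c k ms (w m) (u m) then w m * f ms - k else w m * f (u m) - c * u m).
  { intros m Hm Hmh. unfold curS, usF, lhF. apply Nat.eqb_neq in Hmh. rewrite Hmh. simpl.
    destruct (rb _ _ _ _ _ _); unfold ib;
      [replace (0 + 1 * ms) with ms by ring | replace (u m + 0 * ms) with (u m) by ring]; ring. }
  assert (Ehub : curS f c k ms w u hub hub = 1 * f ms - c * ms).
  { unfold curS, usF, lhF. rewrite Nat.eqb_refl, Hwh. simpl. unfold ib.
    replace (ms + 0 * ms) with ms by ring. ring. }
  split; [|split; [|split; [|split; [|split; [|split; [|split; [|split]]]]]]].
  - intros m Hm Hmh. destruct (Gn m Hm Hmh) as (_ & _ & G3 & _ & G5 & _).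
    unfold usF. apply Nat.eqb_neq in Hmh. rewrite Hmh. split; auto.
    intros E; rewrite E; auto.
  - intros m Hm. unfold usF. destruct (Nat.eqb m hub). apply Hms.
    destruct (rb _ _ _ _ _ _). lra. apply Hu; auto.
  - unfold usF. rewrite Nat.eqb_refl. auto.
  - intros; reflexivity.
  - intros m Hm v Hv P HP. destruct (Nat.eq_dec m hub) as [->|Hmh].
    + rewrite (HP eq_refl), Ehub, Hwh. unfold ib. destruct Hms as [_ Hmax].
      specialize (Hmax (v + 0 * ms) ltac:(lra)). lra.
    + rewrite (Ecur m Hm Hmh). destruct (Gn m Hm Hmh) as (G1 & _).
      destruct (G1 v Hv) as [G1a G1b]. unfold ib. destruct P.
      * replace (v + 1 * ms) with (v + ms) by ring. lra.
      * replace (v + 0 * ms) with v by ring. lra.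
  - intros m Hm Hmh. rewrite (Ecur m Hm Hmh). destruct (Gn m Hm Hmh) as (_ & G2 & _).
    unfold spart. exact G2.
  - rewrite Ehub. unfold spart. rewrite Hwh.
    apply (gen_hub f c k ms (u hub) (L hub) A H Hc Hk Hms (Hu hub Hhub) HA).
    intros v Hv. rewrite <- Hwh. apply HO; auto.
  - intros m Hm Hmh HL. destruct (Gn m Hm Hmh) as (_ & _ & _ & G4 & _). auto.
  - intros m hh Hm Hmh H1 H2 H3. rewrite (Ecur m Hm Hmh). destruct (Gn m Hm Hmh) as (_ & _ & _ & _ & _ & G6).
    unfold spart. apply G6; auto.
Qed.

Lemma sumto_scal n a F : sumto n (fun q => a * F q) = a * sumto n F.
Proof. induction n; simpl. ring. rewrite IHn. ring. Qed.

Lemma sumto_minus n F G : sumto n (fun q => F q - G q) = sumto n F - sumto n G.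
Proof. induction n; simpl. ring. rewrite IHn. ring. Qed.

Lemma lk_and n r s m q : lk n (fun q => r q && s q)%bool m q = (lk n r m q && s q)%bool.
Proof. unfold lk. destruct (Nat.ltb q n), (Nat.eqb q m), (r q), (s q); reflexivity. Qed.

Definition hi (b : R) (t : nat -> R) (m : nat) : R :=
  if Rle_dec b (t m) then (if Rlt_dec (t m) 1 then 1 else 0) else 0.

Lemma hi_nonneg b t m : 0 <= hi b t m.
Proof. unfold hi. destruct (Rle_dec _ _); [destruct (Rlt_dec _ _)|]; lra. Qed.

Ltac lin := first [lra | nra].

Lemma rb_true f c k ms th u : (forall w, 0 <= w -> th * f w - c * w <= th * f ms - k) -> 0 <= u ->
  rb f c k ms th u = true.
Proof. intros H Hu. unfold rb. destruct (Rle_dec _ _) as [|Hn]; [reflexivity|]. exfalso. apply Hn. apply H. exact Hu. Qed.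

Lemma core f c k n t x y g i j ms h a b :
  f_assumptions f c -> 0 < c -> 0 < k -> (3 <= n)%nat -> type_profile n t ->
  nash n f c k t x y g -> ismax f c ms ->
  (i < n)%nat -> (j < n)%nat -> i <> j ->
  (forall m q, (m < n)%nat -> link n g m q = true -> q = i \/ q = j) ->
  link n g i j = true -> link n g j i = true ->
  0 < x i -> y i = 0 -> x j = 0 -> 0 < y j ->
  (0 < ms -> 0 < h /\ a < b < 1 /\ 0 < a /\ (1 - b) * (f ms - f 0) <= c * h / 2 /\
     (forall th, 0 <= th <= 1 -> k <= (1 - th) * (f ms - f 0) -> th <= a) /\
     (forall th X, 0 < th <= a -> 0 < X -> (forall w, 0 <= w < X -> c * (X - w) <= th * (f X - f w)) -> X <= ms - h) /\
     2 * c * ms < c * h / 2 * sumto n (hi b t)) ->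
  exists x' y' g', nash n f c k t x' y' g' /\ welfare n f c k t x y g < welfare n f c k t x' y' g'.
Proof.
  intros H Hc Hk Hn3 [Hmono [Ht0 Htp]] [Hadm Hdev] Hms Hi Hj Hij Hlinks Hgij Hgji Hxi Hyi Hxj Hyj Hconst.
  set (p := (n - 1)%nat) in *.
  assert (Hp : (p < n)%nat) by (unfold p; lia).
  assert (Hp0 : p <> 0%nat) by (unfold p; lia).
  assert (Hmono' : forall a b, (a < n)%nat -> (b < n)%nat -> (a <= b)%nat -> t a <= t b).
  { intros a0 b0 Ha0 Hb0 Hab. destruct (Nat.eq_dec a0 b0). subst; lra. left; apply Hmono; lia. }
  assert (Ht01 : forall m, (m < n)%nat -> 0 <= t m <= 1).
  { intros m Hm. split. rewrite <- Ht0. apply Hmono'; lia. rewrite <- Htp. apply Hmono'; unfold p; lia. }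
  assert (Htl1 : forall m, (m < n)%nat -> m <> p -> t m < 1).
  { intros m Hm Hmp. rewrite <- Htp. apply Hmono; unfold p in *; lia. }
  assert (Htg0 : forall m, (m < n)%nat -> m <> 0%nat -> 0 < t m).
  { intros m Hm Hm0. rewrite <- Ht0. apply Hmono; lia. }
  assert (Hinj : forall m m', (m < n)%nat -> (m' < n)%nat -> t m = t m' -> m = m').
  { intros m m' Hm Hm' E. destruct (Nat.lt_trichotomy m m') as [L|[L|L]]; auto.
    pose proof (Hmono m' m ltac:(lia) Hm'). lra. pose proof (Hmono m m' ltac:(lia) Hm). lra. }
  set (X := x i) in *. set (Y := y j) in *.
  assert (EX : x i = X) by reflexivity. assert (EY : y j = Y) by reflexivity. clearbody X Y.
  assert (Hrow : forall m q, (m < n)%nat -> lk n (g m) m q = true -> q = i \/ q = j).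
  { intros m q Hm E. apply (Hlinks m q Hm). exact E. }
  set (Li := fun m => lk n (g m) m i). set (Lj := fun m => lk n (g m) m j).
  assert (SXx : forall m, (m < n)%nat -> SX n (g m) m x = ib (Li m) * X).
  { intros m Hm. rewrite (SX_two n (g m) m x i j Hi Hj Hij (fun q => Hrow m q Hm)).
    unfold Li, ib. rewrite Hxj. destruct (lk n (g m) m i), (lk n (g m) m j); rewrite ?EX; ring. }
  assert (SXy : forall m, (m < n)%nat -> SX n (g m) m y = ib (Lj m) * Y).
  { intros m Hm. rewrite (SX_two n (g m) m y i j Hi Hj Hij (fun q => Hrow m q Hm)).
    unfold Lj, ib. rewrite Hyi. destruct (lk n (g m) m i), (lk n (g m) m j); rewrite ?EY; ring. }
  assert (SEg : forall m, (m < n)%nat -> SE n (g m) m = ib (Li m) + ib (Lj m)).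
  { intros m Hm. rewrite (SE_two n (g m) m i j Hi Hj Hij (fun q => Hrow m q Hm)). reflexivity. }
  assert (HN : forall m v w r, (m < n)%nat -> 0 <= v -> 0 <= w ->
     t m * f (v + SX n r m x) + (1 - t m) * f (w + SX n r m y) - c * (v + w) - SE n r m * k <=
     t m * f (x m + ib (Li m) * X) + (1 - t m) * f (y m + ib (Lj m) * Y) - c * (x m + y m) - (ib (Li m) + ib (Lj m)) * k).
  { intros m v w r Hm Hv Hw. pose proof (Hdev m Hm v w r Hv Hw) as D.
    rewrite payoff_dev, payoff_cur, SXx, SXy, SEg in D by auto. exact D. }
  assert (Hdrop : forall m d, (m < n)%nat -> (d = i \/ d = j) ->
     let r := (fun q => g m q && negb (Nat.eqb q d))%bool in
     SX n r m x = (if Nat.eqb d i then 0 else ib (Li m) * X) /\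
     SX n r m y = (if Nat.eqb d j then 0 else ib (Lj m) * Y) /\
     SE n r m = (if Nat.eqb d i then 0 else ib (Li m)) + (if Nat.eqb d j then 0 else ib (Lj m))).
  { intros m d Hm Hd r.
    assert (Hr : forall q, lk n r m q = true -> q = i \/ q = j).
    { intros q E. unfold r in E. rewrite lk_and in E. apply andb_prop in E as [E _]. apply (Hrow m q Hm E). }
    rewrite (SX_two n r m x i j Hi Hj Hij Hr), (SX_two n r m y i j Hi Hj Hij Hr), (SE_two n r m i j Hi Hj Hij Hr).
    unfold r. rewrite !lk_and. unfold Li, Lj, ib.
    assert (Hji : Nat.eqb j i = false) by (apply Nat.eqb_neq; auto).
    assert (Hij' : Nat.eqb i j = false) by (apply Nat.eqb_neq; auto).
    destruct Hd as [-> | ->]; rewrite ?Nat.eqb_refl, ?Hji, ?Hij'; simpl;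
      destruct (lk n (g m) m i), (lk n (g m) m j); simpl; rewrite ?Hxj, ?Hyi, ?EX, ?EY; repeat split; ring. }
  assert (HOx : forall m, (m < n)%nat -> forall v, 0 <= v ->
     t m * f (v + ib (Li m) * X) - c * v <= t m * f (x m + ib (Li m) * X) - c * x m).
  { intros m Hm v Hv. pose proof (HN m v (y m) (g m) Hm Hv (proj2 (Hadm m Hm))) as D.
    rewrite SXx, SXy, SEg in D by auto. lin. }
  assert (HOy : forall m, (m < n)%nat -> forall v, 0 <= v ->
     (1 - t m) * f (v + ib (Lj m) * Y) - c * v <= (1 - t m) * f (y m + ib (Lj m) * Y) - c * y m).
  { intros m Hm v Hv. pose proof (HN m (x m) v (g m) Hm (proj1 (Hadm m Hm)) Hv) as D.
    rewrite SXx, SXy, SEg in D by auto. lin. }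
  assert (HDx : forall m, (m < n)%nat -> Li m = true -> forall v, 0 <= v ->
     t m * f v - c * v <= t m * f (x m + X) - c * x m - k).
  { intros m Hm HL v Hv. destruct (Hdrop m i Hm (or_introl eq_refl)) as (D1 & D2 & D3).
    pose proof (HN m v (y m) (fun q => g m q && negb (Nat.eqb q i))%bool Hm Hv (proj2 (Hadm m Hm))) as D.
    rewrite D1, D2, D3 in D. rewrite Nat.eqb_refl in D.
    assert (Hji : Nat.eqb i j = false) by (apply Nat.eqb_neq; auto). rewrite Hji in D.
    rewrite HL in D. change (ib true) with 1 in D. replace (v + 0) with v in D by ring.
    replace (x m + 1 * X) with (x m + X) in D by ring. lin. }
  assert (HDy : forall m, (m < n)%nat -> Lj m = true -> forall v, 0 <= v ->
     (1 - t m) * f v - c * v <= (1 - t m) * f (y m + Y) - c * y m - k).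
  { intros m Hm HL v Hv. destruct (Hdrop m j Hm (or_intror eq_refl)) as (D1 & D2 & D3).
    pose proof (HN m (x m) v (fun q => g m q && negb (Nat.eqb q j))%bool Hm (proj1 (Hadm m Hm)) Hv) as D.
    rewrite D1, D2, D3 in D. rewrite Nat.eqb_refl in D.
    assert (Hji : Nat.eqb j i = false) by (apply Nat.eqb_neq; auto). rewrite Hji in D.
    rewrite HL in D. change (ib true) with 1 in D. replace (v + 0) with v in D by ring.
    replace (y m + 1 * Y) with (y m + Y) in D by ring. lin. }
  assert (Li_self : forall m, (m < n)%nat -> m = i -> Li m = false).
  { intros m Hm ->. unfold Li, lk. rewrite Nat.eqb_refl. simpl. destruct (Nat.ltb i n); reflexivity. }
  assert (Lj_self : forall m, (m < n)%nat -> m = j -> Lj m = false).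
  { intros m Hm ->. unfold Lj, lk. rewrite Nat.eqb_refl. simpl. destruct (Nat.ltb j n); reflexivity. }
  assert (Lji : Li j = true) by exact Hgji.
  assert (Lij : Lj i = true) by exact Hgij.
  assert (HXk : k <= c * X).
  { pose proof (HDx j Hj Lji X ltac:(lin)). rewrite Hxj in H0.
    replace (0 + X) with X in H0 by ring. lin. }
  assert (HYk : k <= c * Y).
  { pose proof (HDy i Hi Lij Y ltac:(lin)). rewrite Hyi in H0.
    replace (0 + Y) with Y in H0 by ring. lin. }
  assert (HOi : forall v, 0 <= v -> t i * f v - c * v <= t i * f X - c * X).
  { intros v Hv. pose proof (HOx i Hi v Hv) as D. rewrite (Li_self i Hi eq_refl) in D.
    unfold ib in D. replace (v + 0 * X) with v in D by ring. replace (x i + 0 * X) with X in D by (rewrite EX; ring).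
    rewrite ?EX in D. lin. }
  assert (HOj : forall v, 0 <= v -> (1 - t j) * f v - c * v <= (1 - t j) * f Y - c * Y).
  { intros v Hv. pose proof (HOy j Hj v Hv) as D. rewrite (Lj_self j Hj eq_refl) in D.
    unfold ib in D. replace (v + 0 * Y) with v in D by ring. replace (y j + 0 * Y) with Y in D by (rewrite EY; ring).
    rewrite ?EY in D. lin. }
  assert (HDj : forall v, 0 <= v -> t j * f v - c * v <= t j * f X - k).
  { intros v Hv. pose proof (HDx j Hj Lji v Hv) as D. rewrite Hxj in D. replace (0 + X) with X in D by ring. lin. }
  assert (HDi : forall v, 0 <= v -> (1 - t i) * f v - c * v <= (1 - t i) * f Y - k).
  { intros v Hv. pose proof (HDy i Hi Lij v Hv) as D. rewrite Hyi in D. replace (0 + Y) with Y in D by ring. lin. }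
  assert (Hip : i <> p).
  { intros E. pose proof (HDi 0 ltac:(lra)). rewrite E, Htp in H0. lin. }
  assert (Hj0 : j <> 0%nat).
  { intros E. pose proof (HDj 0 ltac:(lra)). rewrite E, Ht0 in H0. lin. }
  assert (Hi0 : i <> 0%nat).
  { intros E. pose proof (HOi 0 ltac:(lra)). rewrite E, Ht0 in H0. lin. }
  assert (Hjp : j <> p).
  { intros E. pose proof (HOj 0 ltac:(lra)). rewrite E, Htp in H0. lin. }
  assert (HXms : X <= ms).
  { apply (SC f c ms (t i) X 0 H Hms (conj (proj1 (Ht01 i Hi)) (Htl1 i Hi Hip)) (Rle_refl 0) ltac:(lra) (proj1 Hms)).
    intros v Hv. apply HOi; auto. }
  assert (HYms : Y <= ms).
  { assert (0 <= 1 - t j < 1) by (pose proof (Htg0 j Hj Hj0); pose proof (Ht01 j Hj); lra).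
    apply (SC f c ms (1 - t j) Y 0 H Hms H0 (Rle_refl 0) ltac:(lra) (proj1 Hms)).
    intros v Hv. apply HOj; auto. }
  assert (Hmspos : 0 < ms) by lin.
  destruct (Hconst Hmspos) as (Hh & Hab & Ha0 & Hb1 & Ha & Hgap & Hcount).
  assert (HfY : f Y <= f ms) by (apply (fa_incr f c _ _ H); lin).
  assert (HD0 : 0 <= f ms - f 0) by (pose proof (fa_incr f c 0 ms H ltac:(lra) ltac:(lra)); lra).
  assert (Hta : t i <= a).
  { apply Ha. apply Ht01; auto. pose proof (HDi 0 ltac:(lra)).
    pose proof (Ht01 i Hi). assert ((1 - t i) * f Y <= (1 - t i) * f ms) by (apply Rmult_le_compat_l; lra).
    lin. }
  assert (HXh : X <= ms - h).
  { apply (Hgap (t i) X). split; [apply Htg0; auto | auto]. lin.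
    intros w Hw. pose proof (HOi w (proj1 Hw)). lin. }
  assert (Htji : t j < t i).
  { assert (Hle : t j <= t i).
    { apply (deriv_types f c X (t i) (t j) X H Hc ltac:(lin) (proj1 (Ht01 i Hi)) (proj1 (Ht01 j Hj)) ltac:(lin)).
      - intros e He. pose proof (HOi (X - e) ltac:(lra)). lin.
      - intros e He. pose proof (HOx j Hj e ltac:(lra)) as D. rewrite Lji, Hxj in D. unfold ib in D.
        replace (e + 1 * X) with (X + e) in D by ring. replace (0 + 1 * X) with X in D by ring. lin. }
    destruct (Req_dec (t j) (t i)) as [E|]; [|lra]. exfalso. apply Hij. symmetry. apply Hinj; auto. }
  assert (Hkms : k <= c * ms) by nra.
  assert (Hxadm : forall m, (m < n)%nat -> 0 <= x m) by (intros; apply Hadm; auto).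
  assert (Hyadm : forall m, (m < n)%nat -> 0 <= y m) by (intros; apply Hadm; auto).
  assert (Hw01 : forall m, (m < n)%nat -> 0 <= (fun m => 1 - t m) m <= 1) by (intros m Hm; pose proof (Ht01 m Hm); simpl; lra).
  assert (Hw0 : (fun m => 1 - t m) 0%nat = 1) by (simpl; rewrite Ht0; ring).
  assert (Hw1 : forall m, (m < n)%nat -> m <> 0%nat -> (fun m => 1 - t m) m < 1) by (intros m Hm Hm0; pose proof (Htg0 m Hm Hm0); simpl; lra).
  assert (H0n : (0 < n)%nat) by lia.
  destruct (side_facts f c k ms n t x p X Li H Hc Hk Hms Hp Ht01 Htp Htl1 Hxadm ltac:(lra) HOx HDx)
    as (SXa & SXb & SXc & SXd & SXe & SXf & SXg & SXh & SXi).
  destruct (side_facts f c k ms n (fun m => 1 - t m) y 0%nat Y Lj H Hc Hk Hms H0n Hw01 Hw0 Hw1 Hyadm ltac:(lra) HOy HDy)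
    as (SYa & SYb & SYc & SYd & SYe & SYf & SYg & SYh & SYi).
  assert (Hcov : forall m, (m < n)%nat -> rb f c k ms (t m) (x m) = true \/ rb f c k ms (1 - t m) (y m) = true).
  { intros m Hm. destruct (Rle_dec (t j) (t m)).
    - left. apply rb_true; auto.
      apply (G5 f c k ms (t j) (t m) X H Hms HDj); try lra. split; [apply Ht01; auto| auto]. apply Ht01; auto.
    - right. apply rb_true; auto. pose proof (Ht01 m Hm). pose proof (Ht01 i Hi).
      apply (G5 f c k ms (1 - t i) (1 - t m) Y H Hms HDi); lra. }
  assert (Hx0 : x 0%nat = 0).
  { pose proof (HOx 0%nat H0n 0 ltac:(lra)) as D. rewrite Ht0, !Rmult_0_l in D. pose proof (Hxadm 0%nat H0n). nra. }
  assert (Hyp : y p = 0).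
  { pose proof (HOy p Hp 0 ltac:(lra)) as D. rewrite Htp, Rminus_diag, !Rmult_0_l in D. pose proof (Hyadm p Hp). nra. }
  set (xs := usF f c k ms t x p) in *.
  set (ys := usF f c k ms (fun m => 1 - t m) y 0%nat) in *.
  set (lpx := lhF f c k ms t x p) in *.
  set (lpy := lhF f c k ms (fun m => 1 - t m) y 0%nat) in *.
  assert (Hxs0 : xs 0%nat = 0).
  { unfold xs, usF. assert (E : Nat.eqb 0 p = false) by (apply Nat.eqb_neq; lia). rewrite E.
    destruct (rb _ _ _ _ _ _); auto. }
  assert (Hysp : ys p = 0).
  { unfold ys, usF. assert (E : Nat.eqb p 0 = false) by (apply Nat.eqb_neq; lia). rewrite E.
    destruct (rb _ _ _ _ _ _); auto. }
  set (gs := fun a b => (Nat.eqb b p && lpx a || Nat.eqb b 0 && lpy a)%bool).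
  assert (Hgsrow : forall m q, lk n (gs m) m q = true -> q = p \/ q = 0%nat).
  { intros m q E. apply lk_lt in E as (_ & _ & E). unfold gs in E.
    apply Bool.orb_prop in E as [E|E]; apply andb_prop in E as [E _]; apply Nat.eqb_eq in E; auto. }
  assert (Hgsp : forall m, lk n (gs m) m p = lpx m).
  { intros m. unfold lk, gs, lpx, lhF. rewrite Nat.eqb_refl.
    assert (E1 : Nat.ltb p n = true) by (apply Nat.ltb_lt; auto). rewrite E1.
    assert (E2 : Nat.eqb p 0 = false) by (apply Nat.eqb_neq; auto). rewrite E2.
    destruct (Nat.eq_dec m p) as [->|Hne]. rewrite Nat.eqb_refl. reflexivity.
    assert (E3 : Nat.eqb p m = false) by (apply Nat.eqb_neq; auto).
    assert (E4 : Nat.eqb m p = false) by (apply Nat.eqb_neq; auto). rewrite E3, E4. simpl.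
    destruct (rb _ _ _ _ _ _); reflexivity. }
  assert (Hgs0 : forall m, lk n (gs m) m 0%nat = lpy m).
  { intros m. unfold lk, gs, lpy, lhF. rewrite Nat.eqb_refl.
    assert (E1 : Nat.ltb 0 n = true) by (apply Nat.ltb_lt; auto). rewrite E1.
    assert (E2 : Nat.eqb 0 p = false) by (apply Nat.eqb_neq; auto). rewrite E2.
    destruct m; simpl; [reflexivity|]. destruct (rb _ _ _ _ _ _); reflexivity. }
  assert (Hpaystar : forall m, (m < n)%nat -> payoff n f c k t xs ys gs m =
     curS f c k ms t x p m + curS f c k ms (fun m => 1 - t m) y 0%nat m).
  { intros m Hm. rewrite payoff_cur.
    rewrite (SX_two n (gs m) m xs p 0%nat Hp H0n Hp0 (Hgsrow m)).
    rewrite (SX_two n (gs m) m ys p 0%nat Hp H0n Hp0 (Hgsrow m)).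
    rewrite (SE_two n (gs m) m p 0%nat Hp H0n Hp0 (Hgsrow m)).
    rewrite Hgsp, Hgs0, Hxs0, Hysp, SXc, SYc. unfold curS. fold xs ys lpx lpy. cbv beta.
    unfold ib. destruct (lpx m), (lpy m); rewrite ?Rmult_1_l, ?Rmult_0_l, ?Rplus_0_r, ?Rplus_0_l; ring. }
  assert (Hlkself : forall r m, lk n r m m = false).
  { intros r m. unfold lk. rewrite Nat.eqb_refl. simpl. destruct (Nat.ltb m n); reflexivity. }
  assert (Hsplit : forall r m (u : nat -> R) hub, (hub < n)%nat -> u hub = ms ->
     SX n r m u = ib (lk n r m hub) * ms + SX n r m (fun q => if Nat.eqb q hub then 0 else u q)).
  { intros r m u hub Hhb Hu. unfold SX.
    assert (E : sumto n (fun q => if lk n r m q then (if Nat.eqb q hub then ms else 0) else 0) = ib (lk n r m hub) * ms).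
    { rewrite (sumto_one n (fun q => if lk n r m q then (if Nat.eqb q hub then ms else 0) else 0) hub Hhb).
      - rewrite Nat.eqb_refl. unfold ib. destruct (lk n r m hub); ring.
      - intros q Hq Hqh. destruct (lk n r m q); auto. apply Nat.eqb_neq in Hqh. rewrite Hqh. auto. }
    rewrite <- E, <- sumto_plus. apply sumto_ext. intros q Hq.
    destruct (lk n r m q); [|ring]. destruct (Nat.eqb q hub) eqn:E2; [|ring].
    apply Nat.eqb_eq in E2. rewrite E2, Hu. ring. }
  assert (Hkey : forall r m, (m < n)%nat ->
     c * SX n r m (fun q => if Nat.eqb q p then 0 else xs q) + c * SX n r m (fun q => if Nat.eqb q 0 then 0 else ys q)
     - SE n r m * k <= - ib (lk n r m p) * k - ib (lk n r m 0%nat) * k).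
  { intros r m Hm. unfold SX, SE. rewrite (Rmult_comm _ k), <- sumto_lin.
    eapply Rle_trans. apply (sumto_le_two n _ p 0%nat Hp H0n Hp0).
    - intros q Hq Hqp Hq0.
      assert (E1 : Nat.eqb q p = false) by (apply Nat.eqb_neq; auto).
      assert (E2 : Nat.eqb q 0 = false) by (apply Nat.eqb_neq; auto). rewrite E1, E2.
      destruct (lk n r m q); [|lin].
      destruct (Hcov q Hq) as [Rx|Ry].
      + destruct (SXa q Hq Hqp) as [_ Z]. rewrite (Z Rx). destruct (SYa q Hq Hq0) as [B _]. lin.
      + destruct (SYa q Hq Hq0) as [_ Z]. rewrite (Z Ry). destruct (SXa q Hq Hqp) as [B _]. lin.
    - cbv beta. rewrite !Nat.eqb_refl. assert (E2 : Nat.eqb p 0 = false) by (apply Nat.eqb_neq; auto). rewrite E2.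
      assert (E3 : Nat.eqb 0 p = false) by (apply Nat.eqb_neq; auto). rewrite E3.
      rewrite Hysp, Hxs0. unfold ib. destruct (lk n r m p), (lk n r m 0%nat); lin. }
  exists xs, ys, gs. split.
  - split.
    + intros m Hm. split; [apply SXb | apply SYb]; auto.
    + intros m Hm v w r Hv Hw. rewrite payoff_dev, (Hpaystar m Hm).
      rewrite (Hsplit r m xs p Hp SXc), (Hsplit r m ys 0%nat H0n SYc).
      set (A0 := SX n r m (fun q => if Nat.eqb q p then 0 else xs q)).
      set (B0 := SX n r m (fun q => if Nat.eqb q 0 then 0 else ys q)).
      assert (HA0 : 0 <= A0).
      { unfold A0, SX. apply sumto_nonneg. intros q Hq. destruct (lk n r m q); [|lra].
        destruct (Nat.eqb q p); [lra|]. apply SXb; auto. }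
      assert (HB0 : 0 <= B0).
      { unfold B0, SX. apply sumto_nonneg. intros q Hq. destruct (lk n r m q); [|lra].
        destruct (Nat.eqb q 0); [lra|]. apply SYb; auto. }
      pose proof (Hkey r m Hm) as K. fold A0 B0 in K.
      pose proof (SXe m Hm (v + A0) ltac:(lra) (lk n r m p) ltac:(intros ->; apply Hlkself)) as E1.
      pose proof (SYe m Hm (w + B0) ltac:(lra) (lk n r m 0%nat) ltac:(intros ->; apply Hlkself)) as E2.
      cbv beta in E2.
      replace (v + (ib (lk n r m p) * ms + A0)) with (v + A0 + ib (lk n r m p) * ms) by ring.
      replace (w + (ib (lk n r m 0%nat) * ms + B0)) with (w + B0 + ib (lk n r m 0%nat) * ms) by ring.
      lin.
  - set (lb := fun m => (- (c * ms)) * ib (Nat.eqb m p) + (- (c * ms)) * ib (Nat.eqb m 0) - (- (c * h / 2)) * hi b t m).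
    assert (Hws : welfare n f c k t x y g = sumto n (fun m => spart f c k t x X Li m + spart f c k (fun m => 1 - t m) y Y Lj m)).
    { unfold welfare. apply sumto_ext. intros m Hm. rewrite payoff_cur, SXx, SXy, SEg by auto.
      unfold spart. cbv beta. ring. }
    assert (Hwstar : welfare n f c k t xs ys gs = sumto n (fun m => curS f c k ms t x p m + curS f c k ms (fun m => 1 - t m) y 0%nat m)).
    { unfold welfare. apply sumto_ext. intros m Hm. apply Hpaystar; auto. }
    assert (Hper : forall m, (m < n)%nat ->
       spart f c k t x X Li m + spart f c k (fun m => 1 - t m) y Y Lj m + lb m <=
       curS f c k ms t x p m + curS f c k ms (fun m => 1 - t m) y 0%nat m).
    { intros m Hm. unfold lb.
      destruct (Nat.eq_dec m p) as [->|Hmp].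
      - rewrite Nat.eqb_refl. assert (E : Nat.eqb p 0 = false) by (apply Nat.eqb_neq; auto). rewrite E.
        assert (Hh0 : hi b t p = 0) by (unfold hi; rewrite Htp; destruct (Rle_dec _ _); [destruct (Rlt_dec _ _)|]; lra).
        rewrite Hh0. pose proof SXg. pose proof (SYf p Hp Hp0). unfold ib. lin.
      - destruct (Nat.eq_dec m 0) as [->|Hm0].
        + rewrite Nat.eqb_refl. assert (E : Nat.eqb 0 p = false) by (apply Nat.eqb_neq; auto). rewrite E.
          assert (Hh0 : hi b t 0 = 0) by (unfold hi; rewrite Ht0; destruct (Rle_dec _ _); [destruct (Rlt_dec _ _)|]; lra).
          rewrite Hh0. pose proof SYg. pose proof (SXf 0%nat H0n ltac:(auto)). unfold ib. lin.
        + assert (E1 : Nat.eqb m p = false) by (apply Nat.eqb_neq; auto).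
          assert (E2 : Nat.eqb m 0 = false) by (apply Nat.eqb_neq; auto). rewrite E1, E2.
          pose proof (SYf m Hm Hm0). unfold ib.
          unfold hi. destruct (Rle_dec b (t m)); [destruct (Rlt_dec (t m) 1)|].
          * assert (Hq : (1 - t m) * (f ms - f 0) <= c * h / 2).
            { assert ((1 - t m) * (f ms - f 0) <= (1 - b) * (f ms - f 0)) by (apply Rmult_le_compat_r; lra). lra. }
            pose proof (SXi m h Hm Hmp Hq HXh HXk). lin.
          * pose proof (SXf m Hm Hmp). lin.
          * pose proof (SXf m Hm Hmp). lin. }
    assert (Hlb : sumto n lb = - (c * ms) - (c * ms) + c * h / 2 * sumto n (hi b t)).
    { unfold lb. rewrite sumto_lin.
      rewrite (sumto_one n (fun m => ib (Nat.eqb m p)) p Hp).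
      rewrite (sumto_one n (fun m => ib (Nat.eqb m 0)) 0%nat H0n).
      rewrite !Nat.eqb_refl. unfold ib. ring.
      intros q Hq Hq0. apply Nat.eqb_neq in Hq0. unfold ib. rewrite Hq0. auto.
      intros q Hq Hqp. apply Nat.eqb_neq in Hqp. unfold ib. rewrite Hqp. auto. }
    rewrite Hws, Hwstar.
    assert (S1 : sumto n (fun m => spart f c k t x X Li m + spart f c k (fun m => 1 - t m) y Y Lj m + lb m) <=
                 sumto n (fun m => curS f c k ms t x p m + curS f c k ms (fun m => 1 - t m) y 0%nat m)).
    { apply sumto_le. auto. }
    rewrite sumto_plus in S1. rewrite Hlb in S1. lra.
Qed.

Lemma nat_unbounded r : exists N : nat, r < INR N.
Proof.
  destruct (archimed r) as [H1 _]. destruct (Z_lt_le_dec (up r) 0) as [Hl|Hl].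
  - exists 0%nat. simpl. apply IZR_lt in Hl. lra.
  - exists (Z.to_nat (up r)). rewrite INR_IZR_INZ, Z2Nat.id; auto.
Qed.

Lemma row_facts n f c k t x y g a b : nash n f c k t x y g -> 0 < k -> (a < n)%nat -> (b < n)%nat -> a <> b ->
  link n g a b = true -> (forall q, link n g a q = true -> q = a \/ q = b) ->
  (forall v, 0 <= v -> t a * f (v + x b) - c * v <= t a * f (x a + x b) - c * x a) /\
  (forall v, 0 <= v -> (1 - t a) * f (v + y b) - c * v <= (1 - t a) * f (y a + y b) - c * y a) /\
  (x b = 0 -> y b = 0 -> False).
Proof.
  intros [Hadm Hdev] Hk Ha Hb Hab Hl Hrow.
  assert (Hr : forall q, lk n (g a) a q = true -> q = a \/ q = b) by (intros q E; apply Hrow; exact E).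
  assert (Laa : lk n (g a) a a = false).
  { unfold lk. rewrite Nat.eqb_refl. simpl. destruct (Nat.ltb a n); reflexivity. }
  assert (Lab : lk n (g a) a b = true) by exact Hl.
  assert (SXa : forall u : nat -> R, SX n (g a) a u = u b).
  { intros u. rewrite (SX_two n (g a) a u a b Ha Hb Hab Hr), Laa, Lab. ring. }
  assert (SEa : SE n (g a) a = 1).
  { rewrite (SE_two n (g a) a a b Ha Hb Hab Hr), Laa, Lab. ring. }
  pose proof (Hadm a Ha) as [Hxa Hya].
  split; [|split].
  - intros v Hv. pose proof (Hdev a Ha v (y a) (g a) Hv Hya) as D.
    rewrite payoff_dev, payoff_cur, !SXa, SEa in D. lin.
  - intros v Hv. pose proof (Hdev a Ha (x a) v (g a) Hxa Hv) as D.
    rewrite payoff_dev, payoff_cur, !SXa, SEa in D. lin.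
  - intros Hx Hy. pose proof (Hdev a Ha (x a) (y a) (fun _ => false) Hxa Hya) as D.
    rewrite payoff_dev, payoff_cur, !SXa, SEa in D.
    assert (Z : forall u : nat -> R, SX n (fun _ => false) a u = 0).
    { intros u. unfold SX. apply sumto_zero. intros q Hq. unfold lk. rewrite Bool.andb_false_r. reflexivity. }
    assert (ZE : SE n (fun _ => false) a = 0).
    { unfold SE. apply sumto_zero. intros q Hq. unfold lk. rewrite Bool.andb_false_r. reflexivity. }
    rewrite !Z, ZE, Hx, Hy in D. lin.
Qed.

Lemma not_both f c z th1 th2 u1 u2 : f_assumptions f c -> 0 < c -> 0 <= th1 -> 0 <= th2 -> 0 < u1 -> 0 < u2 ->
  (forall v, 0 <= v -> th1 * f (v + u2) - c * v <= th1 * f (u1 + u2) - c * u1) ->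
  (forall v, 0 <= v -> th2 * f (v + u1) - c * v <= th2 * f (u2 + u1) - c * u2) ->
  z = u1 + u2 -> th2 <= th1.
Proof.
  intros H Hc H1 H2 Hu1 Hu2 O1 O2 Hz.
  apply (deriv_types f c z th1 th2 u1 H Hc ltac:(lra) H1 H2 Hu1).
  - intros e He. pose proof (O1 (u1 - e) ltac:(lra)) as D.
    replace (u1 - e + u2) with (z - e) in D by lra. rewrite <- Hz in D. lin.
  - intros e He. pose proof (O2 (u2 + e) ltac:(lra)) as D.
    replace (u2 + e + u1) with (z + e) in D by lra. replace (u2 + u1) with z in D by lra. lin.
Qed.

Definition Hconst_of f c k n t ms h a b : Prop :=
  0 < ms -> 0 < h /\ a < b < 1 /\ 0 < a /\ (1 - b) * (f ms - f 0) <= c * h / 2 /\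
     (forall th, 0 <= th <= 1 -> k <= (1 - th) * (f ms - f 0) -> th <= a) /\
     (forall th X, 0 < th <= a -> 0 < X -> (forall w, 0 <= w < X -> c * (X - w) <= th * (f X - f w)) -> X <= ms - h) /\
     2 * c * ms < c * h / 2 * sumto n (hi b t).

Lemma no_collab f c k n t x y g ms h a b :
  f_assumptions f c -> 0 < c -> 0 < k -> (3 <= n)%nat -> type_profile n t -> ismax f c ms ->
  Hconst_of f c k n t ms h a b -> welfare_max_eq n f c k t x y g -> collaborative n g -> False.
Proof.
  intros H Hc Hk Hn3 Htp Hms Hconst [Hnash Hmax] (i & j & Hi & Hj & Hij & Hgij & Hgji & HC).
  assert (Hlinks : forall m q, (m < n)%nat -> link n g m q = true -> q = i \/ q = j).
  { intros m q Hm E. assert (Hq : (q < n)%nat) by (apply (lk_lt n (g m) m q E)).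
    apply (HC q Hq). split; auto. exists m. auto. }
  destruct Htp as [Hmono [Ht0 Ht1]].
  assert (Ht01 : forall m, (m < n)%nat -> 0 <= t m <= 1).
  { intros m Hm. split.
    - destruct (Nat.eq_dec m 0) as [->|]; [lra|]. rewrite <- Ht0. left. apply Hmono; lia.
    - destruct (Nat.eq_dec m (n - 1)) as [->|]; [lra|]. rewrite <- Ht1. left. apply Hmono; lia. }
  assert (Hdist : t i <> t j).
  { intros E. destruct (Nat.lt_trichotomy i j) as [L|[L|L]]; [|lia|].
    pose proof (Hmono j i L Hj). lra. pose proof (Hmono i j L Hi). lra. }
  destruct (row_facts n f c k t x y g i j Hnash Hk Hi Hj Hij Hgij (fun q E => Hlinks i q Hi E)) as (Oix & Oiy & Bj).
  destruct (row_facts n f c k t x y g j i Hnash Hk Hj Hi (not_eq_sym Hij) Hgji (fun q E => proj1 (or_comm _ _) (Hlinks j q Hj E))) as (Ojx & Ojy & Bi).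
  destruct Hnash as [Hadm Hdev].
  pose proof (Hadm i Hi) as [Hxi Hyi]. pose proof (Hadm j Hj) as [Hxj Hyj].
  pose proof (Ht01 i Hi). pose proof (Ht01 j Hj).
  assert (Ax : ~ (0 < x i /\ 0 < x j)).
  { intros [P1 P2].
    pose proof (not_both f c (x i + x j) (t i) (t j) (x i) (x j) H Hc ltac:(lra) ltac:(lra) P1 P2 Oix Ojx eq_refl).
    pose proof (not_both f c (x j + x i) (t j) (t i) (x j) (x i) H Hc ltac:(lra) ltac:(lra) P2 P1 Ojx Oix eq_refl).
    lra. }
  assert (Ay : ~ (0 < y i /\ 0 < y j)).
  { intros [P1 P2].
    pose proof (not_both f c (y i + y j) (1 - t i) (1 - t j) (y i) (y j) H Hc ltac:(lra) ltac:(lra) P1 P2 Oiy Ojy eq_refl).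
    pose proof (not_both f c (y j + y i) (1 - t j) (1 - t i) (y j) (y i) H Hc ltac:(lra) ltac:(lra) P2 P1 Ojy Oiy eq_refl).
    lra. }
  assert (Hnash' : nash n f c k t x y g) by (split; auto).
  destruct (Rlt_dec 0 (x i)) as [Pxi|Pxi].
  - assert (Exj : x j = 0) by (destruct (Rlt_dec 0 (x j)); [exfalso; tauto|lra]).
    assert (Pyj : 0 < y j) by (destruct (Rlt_dec 0 (y j)); [auto|exfalso; apply Bj; lra]).
    assert (Eyi : y i = 0) by (destruct (Rlt_dec 0 (y i)); [exfalso; tauto|lra]).
    destruct (core f c k n t x y g i j ms h a b H Hc Hk Hn3 (conj Hmono (conj Ht0 Ht1)) Hnash' Hms Hi Hj Hij
                Hlinks Hgij Hgji Pxi Eyi Exj Pyj Hconst) as (x' & y' & g' & N' & W').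
    pose proof (Hmax x' y' g' N'). lra.
  - assert (Exi : x i = 0) by lra.
    assert (Pyi : 0 < y i) by (destruct (Rlt_dec 0 (y i)); [auto|exfalso; apply Bi; lra]).
    assert (Eyj : y j = 0) by (destruct (Rlt_dec 0 (y j)); [exfalso; tauto|lra]).
    assert (Pxj : 0 < x j) by (destruct (Rlt_dec 0 (x j)); [auto|exfalso; apply Bj; lra]).
    destruct (core f c k n t x y g j i ms h a b H Hc Hk Hn3 (conj Hmono (conj Ht0 Ht1)) Hnash' Hms Hj Hi (not_eq_sym Hij)
                (fun m q Hm E => proj1 (or_comm _ _) (Hlinks m q Hm E)) Hgji Hgij Pxj Eyj Exi Pyi Hconst) as (x' & y' & g' & N' & W').
    pose proof (Hmax x' y' g' N'). lra.
Qed.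

Lemma sumto_mono n1 n2 F : (forall q, (q < n2)%nat -> 0 <= F q) -> (n1 <= n2)%nat -> sumto n1 F <= sumto n2 F.
Proof.
  intros HF Hle. induction n2.
  - assert (n1 = 0%nat) by lia. subst. lra.
  - destruct (Nat.eq_dec n1 (S n2)) as [->|Hne]. lra.
    simpl. pose proof (HF n2 ltac:(lia)). assert (sumto n1 F <= sumto n2 F) by (apply IHn2; [intros; apply HF; lia | lia]). lra.
Qed.

Lemma count_hi n t b d : (forall i j, (j < i)%nat -> (i < n)%nat -> t j < t i) -> 0 < d -> 0 <= b ->
  forall K M, (M <= n)%nat -> b + 2 * INR K * d < 1 ->
  (forall r, (r < K)%nat -> exists q, (q < M)%nat /\ b + 2 * INR r * d < t q < b + 2 * (INR r + 1) * d) ->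
  INR K <= sumto M (hi b t).
Proof.
  intros Hmono Hd Hb K. induction K; intros M HM HK H.
  - simpl. apply sumto_nonneg. intros; apply hi_nonneg.
  - rewrite S_INR in *. destruct (H K (Nat.lt_succ_diag_r K)) as [q [Hq Htq]].
    pose proof (pos_INR K) as HK0.
    assert (IH : INR K <= sumto q (hi b t)).
    { apply IHK; [lia|lra|]. intros r Hr. destruct (H r ltac:(lia)) as [q' [Hq' Ht']].
      exists q'. split; auto.
      assert (Hr1 : INR r + 1 <= INR K) by (rewrite <- S_INR; apply le_INR; lia).
      destruct (Nat.lt_ge_cases q' q) as [|Hge]; auto. exfalso.
      destruct (Nat.eq_dec q q') as [<-|Hne]. nra.
      pose proof (Hmono q' q ltac:(lia) ltac:(lia)). nra. }
    assert (Hhq : hi b t q = 1).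
    { unfold hi. destruct (Rle_dec b (t q)) as [|Hn]; [|exfalso; apply Hn; nra].
      destruct (Rlt_dec (t q) 1) as [|Hn]; [auto|exfalso; apply Hn; nra]. }
    assert (sumto (S q) (hi b t) <= sumto M (hi b t)) by (apply sumto_mono; [intros; apply hi_nonneg|lia]).
    simpl in H0. lra.
Qed.

Theorem mainTheorem14 :
  forall (f : R -> R) (c k : R),
    0 < c -> 0 < k -> f_assumptions f c ->
    exists delta : R, 0 < delta /\
      forall (n : nat) (t : nat -> R),
        (3 <= n)%nat -> type_profile n t -> delta_dense n t delta ->
        forall (x y : nat -> R) (g : nat -> nat -> bool),
          welfare_max_eq n f c k t x y g -> ~ collaborative n g.
Proof.
  intros f c k Hc Hk H.
  destruct (exists_max f c H Hc) as [ms [Hms0 Hmax]].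
  assert (Hms : ismax f c ms) by (split; auto).
  destruct (Rle_lt_dec ms 0) as [Hm0 | Hmpos].
  - exists 1. split. lra. intros n t Hn3 Htp Hdense x y g HW Hcol.
    apply (no_collab f c k n t x y g ms 0 0 0 H Hc Hk Hn3 Htp Hms); auto. intro; lra.
  - assert (HfD : f 0 < f ms) by (apply H; lra).
    set (D := f ms - f 0).
    assert (HD : 0 < D) by (unfold D; lra).
    set (a := Rmax (1/2) (1 - k / D)).
    assert (Hkd : 0 < k / D) by (apply Rdiv_lt_0_compat; lra).
    assert (Ha : 0 < a < 1).
    { unfold a. split. pose proof (Rmax_l (1/2) (1 - k/D)); lra. apply Rmax_lub_lt; lra. }
    destruct (gap f c ms a H Hc Hmpos Hmax Ha) as [h [Hh [H2h Hgap]]].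
    set (b := 1 - Rmin ((1 - a) / 2) (c * h / (2 * (D + 1)))).
    assert (Hmin : 0 < Rmin ((1 - a) / 2) (c * h / (2 * (D + 1)))).
    { apply Rmin_glb_lt. lra. apply Rdiv_lt_0_compat; nra. }
    assert (Hmin1 : Rmin ((1 - a) / 2) (c * h / (2 * (D + 1))) <= (1 - a) / 2) by apply Rmin_l.
    assert (Hmin2 : Rmin ((1 - a) / 2) (c * h / (2 * (D + 1))) <= c * h / (2 * (D + 1))) by apply Rmin_r.
    assert (Hb : a < b < 1) by (unfold b; lra).
    destruct (nat_unbounded (4 * ms / h)) as [N HN].
    pose proof (pos_INR N) as HN0.
    set (d := (1 - b) / (2 * (INR N + 1))).
    assert (Hd : 0 < d) by (unfold d; apply Rdiv_lt_0_compat; lra).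
    assert (Hdd : 2 * (INR N + 1) * d = 1 - b) by (unfold d; field; lra).
    exists d. split. auto.
    intros n t Hn3 Htp Hdense x y g HW Hcol.
    apply (no_collab f c k n t x y g ms h a b H Hc Hk Hn3 Htp Hms); auto.
    intros _. split; [auto|split; [auto|split; [lra|split; [|split; [|split]]]]].
    + assert (E : (1 - b) = Rmin ((1 - a) / 2) (c * h / (2 * (D + 1)))) by (unfold b; ring).
      fold D. rewrite E.
      assert (Rmin ((1 - a) / 2) (c * h / (2 * (D + 1))) * D <= c * h / (2 * (D + 1)) * D) by (apply Rmult_le_compat_r; lra).
      assert (c * h / (2 * (D + 1)) * D <= c * h / 2).
      { replace (c * h / (2 * (D + 1)) * D) with (c * h / 2 * (D / (D + 1))) by (field; lra).
        assert (D / (D + 1) <= 1) by (apply (Rmult_le_reg_r (D + 1)); [lra|]; unfold Rdiv; rewrite Rmult_assoc, Rinv_l; lra).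
        assert (0 < c * h / 2) by nra. nra. }
      lra.
    + intros th Hth Hkth. fold D in Hkth.
      assert (th <= 1 - k / D).
      { assert (k / D <= 1 - th).
        { apply (Rmult_le_reg_r D); [lra|]. unfold Rdiv. rewrite Rmult_assoc, Rinv_l; lra. }
        lra. }
      pose proof (Rmax_r (1/2) (1 - k / D)). fold a in H1. lra.
    + intros th X Hth HX Hopt. apply (Hgap th X Hth HX Hopt).
    + destruct Htp as [Hmono [Ht0 Ht1]].
      assert (Hcnt : INR N <= sumto n (hi b t)).
      { apply (count_hi n t b d Hmono Hd ltac:(lra) N n (Nat.le_refl n)).
        - nra.
        - intros r Hr.
          assert (Hr1 : INR r + 1 <= INR N) by (rewrite <- S_INR; apply le_INR; lia).
          pose proof (pos_INR r).
          destruct (Hdense (b + (2 * INR r + 1) * d) ltac:(split; nra)) as [q [Hq Hz]].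
          exists q. split; auto. apply Rabs_lt_between in Hz. nra. }
      assert (4 * ms / h * h = 4 * ms) by (field; lra).
      assert (4 * ms < INR N * h) by nra.
      assert (c * h / 2 * INR N <= c * h / 2 * sumto n (hi b t)) by (apply Rmult_le_compat_l; nra).
      assert (0 < c * (INR N * h - 4 * ms)) by (apply Rmult_lt_0_compat; lra).
      nra.
Qed.
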